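(* Let $\overline\alpha$ be coherent. Then for every $\mathfrak A\in K_{\overline\alpha}$ with $\delta(\mathfrak A)>0$ there is $\mathfrak D\in K_{\overline\alpha}$ with $\mathfrak A\subseteq\mathfrak D$ and $\delta(\mathfrak D)=0$.
   Context: Fix a finite relational language $L$ in which every relation symbol has arity at least $2$. $K_L$ is the class of all finite $L$-structures (including the empty one) in which every relation symbol is interpreted symmetrically and irreflexively. Fix $\overline\alpha:L\to(0,1]$, writing $\overline\alpha_E=\overline\alpha(E)$, such that it is not the case that all symbols of $L$ are binary and $\overline\alpha_E=1$ for all $E$. For $\mathfrak A\in K_L$ let $N_E(\mathfrak A)$ be the number of subsets of $A$ on which $E$ holds and $\delta(\mathfrak A)=|A|-\sum_{E}\overline\alpha_E N_E(\mathfrak A)$. $K_{\overline\alpha}=\{\mathfrak A\in K_L:\delta(\mathfrak A')\ge0\text{ for all substructures }\mathfrak A'\subseteq\mathfrak A\}$. $\overline\alpha$ is coherent if there are positive integers $m_E$ ($E\in L$) with $\sum_{E}m_E\overline\alpha_E\in\mathbb Q$. *)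

(* Defs.v *)
From HB Require Import structures.
From mathcomp Require Import all_boot all_order all_algebra.
From mathcomp Require Import reals.
Set Implicit Arguments. Unset Strict Implicit. Unset Printing Implicit Defensive.
Import Order.TTheory GRing.Theory Num.Theory.
Local Open Scope ring_scope.

(* An L-structure in K_L on a finite carrier T is given by, for each symbol E,
   the set [rels E] of subsets of T on which E holds; each such subset has
   exactly [ar E] elements (symmetric, irreflexive interpretation). *)

Definition wf_str (L T : finType) (ar : L -> nat)
    (rels : L -> {set {set T}}) : Prop :=
  forall (E : L) (S : {set T}), S \in rels E -> #|S| = ar E.

Definition N_E (L T : finType) (rels : L -> {set {set T}}) (E : L)
    (B : {set T}) : nat :=
  #|[set S in rels E | S \subset B]|.

Definition delta (R : realType) (L T : finType) (alpha : L -> R)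
    (rels : L -> {set {set T}}) (B : {set T}) : R :=
  (#|B|%:R - \sum_(E : L) alpha E * (N_E rels E B)%:R)%R.

Definition in_Kalpha (R : realType) (L T : finType) (ar : L -> nat)
    (alpha : L -> R) (rels : L -> {set {set T}}) : Prop :=
  wf_str ar rels /\ forall B : {set T}, (0 <= delta alpha rels B)%R.

Definition coherent (R : realType) (L : finType) (alpha : L -> R) : Prop :=
  exists m : L -> nat, (forall E, (0 < m E)%N) /\
    exists q : rat, (\sum_(E : L) (m E)%:R * alpha E)%R = ratr q.

(* (T, relsA) is a substructure of (T', relsD) via the injective map f
   (induced substructure, identified with its image). *)
Definition embeds (L T T' : finType) (relsA : L -> {set {set T}})
    (relsD : L -> {set {set T'}}) (f : T -> T') : Prop :=
  injective f /\
  forall (E : L) (S : {set T}), (S \in relsA E) = (f @: S \in relsD E).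

(* Main.v *)
Require Import Defs.
From HB Require Import structures.
From mathcomp Require Import all_boot all_order all_algebra.
From mathcomp Require Import reals.
From mathcomp Require Import ring lra zify.
Set Implicit Arguments. Unset Strict Implicit. Unset Printing Implicit Defensive.
Import Order.TTheory GRing.Theory Num.Theory.
Local Open Scope ring_scope.

Definition clamp (R : realType) (u w t : R) : R :=
  if t <= u then u else if w <= t then w else t.

Lemma clamp_sym (R : realType) (a b u w : R) : a <= b -> u <= w ->
  clamp u w b - clamp u w a = clamp a b w - clamp a b u.
Proof.
move=> hab huw; rewrite /clamp.
do ! case: leP => ?; lra.
Qed.

Lemma clamp_mono (R : realType) (u w a b : R) : u <= w -> a <= b ->
  clamp u w a <= clamp u w b.
Proof. move=> ? ?; rewrite /clamp; case: (leP a u) => ?; case: (leP w a) => ?;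
  case: (leP b u) => ?; case: (leP w b) => ?; lra. Qed.

Lemma clamp_lo (R : realType) (u w a : R) : u <= w -> a <= u -> clamp u w a = u.
Proof. move=> ? ?; rewrite /clamp; do ! case: leP => ?; lra. Qed.

Lemma clamp_hi (R : realType) (u w a : R) : u <= w -> w <= a -> clamp u w a = w.
Proof. move=> ? ?; rewrite /clamp; do ! case: leP => ?; lra. Qed.

Lemma clamp_nz (R : realType) (u w a b : R) : u <= w -> a <= b ->
  clamp u w b - clamp u w a != 0 -> a < w /\ u < b.
Proof. move=> ? ?; rewrite /clamp; case: (leP a u) => ?; case: (leP w a) => ?;
  case: (leP b u) => ?; case: (leP w b) => ?; move=> /eqP hne; case: (ltP a w) => h1; case: (ltP u b) => h2 //; exfalso; apply: hne; lra. Qed.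

Lemma tile (R : realType) (t : nat -> R) (N : nat) (u w : R) :
  (forall k, t k <= t k.+1) -> u <= w -> t 0%N <= u -> w <= t N ->
  \sum_(k < N) (clamp u w (t k.+1) - clamp u w (t k)) = w - u.
Proof.
move=> ht huw h0 hN.
rewrite -(big_mkord xpredT (fun k => clamp u w (t k.+1) - clamp u w (t k))).
by rewrite telescope_sumr // clamp_hi // clamp_lo.
Qed.

Definition sp (R : realType) (a : nat -> R) (k : nat) : R := \sum_(j < k) a j.
Definition bp (R : realType) (e : R) (v : nat) : R :=
  if v is v'.+1 then e + v'%:R else 0.
Definition own (R : realType) (e x : R) : nat :=
  if x < e then 0%N else (Num.trunc (x - e)).+1.

Lemma bp_mono (R : realType) (e : R) (v w : nat) : 0 <= e -> (v <= w)%N -> bp e v <= bp e w.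
Proof.
move=> he; case: v => [|v]; case: w => [|w] //=.
- move=> _; rewrite addr_ge0 //.
- by rewrite ltnS => h; rewrite lerD2l ler_nat.
Qed.

Lemma bpS (R : realType) (e : R) (v : nat) : bp e v.+2 = bp e v.+1 + 1.
Proof. by rewrite /= -addrA -natr1. Qed.

Lemma own_spec (R : realType) (e x : R) : 0 < e -> 0 <= x ->
  bp e (own e x) <= x < bp e (own e x).+1.
Proof.
move=> he hx; rewrite /own; case: ltP => hxe /=.
  by rewrite hx /= addr0.
have h0 : 0 <= x - e by rewrite subr_ge0.
have /andP[h1 h2] := truncn_itv h0.
apply/andP; split.
  by rewrite -lerBrDl.
by rewrite -ltrBlDl.
Qed.

Lemma own_le (R : realType) (e x : R) (p : nat) : 0 < e -> 0 <= x ->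
  x < e + p%:R -> (own e x <= p)%N.
Proof.
move=> he hx hxp; rewrite /own; case: ltP => hxe //.
have h0 : 0 <= x - e by rewrite subr_ge0.
by rewrite truncn_lt_nat // ltrBlDl.
Qed.

Lemma spS (R : realType) (a : nat -> R) k : sp a k.+1 = sp a k + a k.
Proof. by rewrite /sp big_ord_recr. Qed.

Lemma sp0 (R : realType) (a : nat -> R) : sp a 0 = 0.
Proof. by rewrite /sp big_ord0. Qed.

Lemma sp_addk (R : realType) (a : nat -> R) (amin : R) :
  (forall j, amin <= a j) -> forall i k, sp a i + k%:R * amin <= sp a (i + k).
Proof.
move=> ha i; elim=> [|k IH]; first by rewrite mulr0n mul0r addr0 addn0.
rewrite addnS spS -natr1 mulrDl mul1r addrA; exact: lerD.
Qed.

Lemma sp_mono (R : realType) (a : nat -> R) :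
  (forall j, 0 <= a j) -> forall k l, (k <= l)%N -> sp a k <= sp a l.
Proof.
move=> ha k l hkl; have := sp_addk ha k (l - k).
by rewrite subnKC // mulr0 addr0.
Qed.

Definition ovl (R : realType) (a : nat -> R) (e : R) (i v : nat) : R :=
  clamp (bp e v) (bp e v.+1) (sp a i.+1) - clamp (bp e v) (bp e v.+1) (sp a i).

Definition str (R : realType) (a : nat -> R) (e : R) (i : nat) : bool :=
  bp e (own e (sp a i)).+1 < sp a i.+1.

Lemma bp_step (R : realType) (e : R) v : 0 <= e -> bp e v.+1 <= bp e v + 1 + e.
Proof.
move=> he; case: v => [|v] /=; first by rewrite addr0 add0r lerDr.
rewrite -natr1 addrA; lra.
Qed.

Lemma bp_le (R : realType) (e : R) v : 0 <= e -> bp e v <= bp e v.+1.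
Proof. by move=> he; apply: bp_mono. Qed.

Lemma sp_lt (R : realType) (a : nat -> R) (e : R) (M p : nat) :
  (forall j, 0 < a j) -> sp a M = e + p%:R ->
  forall i, (i < M)%N -> sp a i < e + p%:R.
Proof.
move=> ha hM i hi; rewrite -hM; apply: (@lt_le_trans _ _ (sp a i.+1)).
  by rewrite spS ltrDl.
apply: sp_mono => // j; exact: ltW.
Qed.

Lemma G1 (R : realType) (a : nat -> R) (amin e : R) (M p : nat) :
  (forall j, amin <= a j /\ a j <= 1) -> 0 < amin -> 0 < e -> sp a M = e + p%:R ->
  forall i, (i < M)%N -> (own e (sp a i) <= p)%N /\
    bp e (own e (sp a i)) <= sp a i < bp e (own e (sp a i)).+1.
Proof.
move=> ha hamin he hM i hi.
have hpos : forall j, 0 < a j by move=> j; exact: (lt_le_trans hamin (proj1 (ha j))).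
have hs0 : 0 <= sp a i by rewrite -(sp0 a); apply: sp_mono => // j; exact: ltW.
split; last exact: own_spec.
apply: own_le => //; exact: (sp_lt hpos hM).
Qed.

Lemma G2 (R : realType) (a : nat -> R) (amin e : R) (M p : nat) :
  (forall j, amin <= a j /\ a j <= 1) -> 0 < amin -> 0 < e -> sp a M = e + p%:R ->
  forall i v, (i < M)%N -> ovl a e i v != 0 ->
  v = own e (sp a i) \/ (v = (own e (sp a i)).+1 /\ str a e i).
Proof.
move=> ha hamin he hM i v hi hnz.
have hpos : forall j, 0 < a j by move=> j; exact: (lt_le_trans hamin (proj1 (ha j))).
have [_ /andP[h1 h2]] := G1 ha hamin he hM hi.
have [c1 c2] := clamp_nz (bp_le v (ltW he)) (sp_mono (fun j => ltW (hpos j)) (leqnSn i)) hnz.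
set o := own e (sp a i) in h1 h2 *.
case: (ltngtP v o) => hvo.
- exfalso; have := bp_mono (ltW he) hvo; lra.
- case: (ltngtP v o.+1) => hvo1.
  + by exfalso; move: hvo1; rewrite ltnS leqNgt hvo.
  + exfalso.
    have h3 := bp_mono (ltW he) hvo1; rewrite bpS in h3.
    have := proj2 (ha i); rewrite spS in c2; lra.
  + by right; split => //; rewrite /str -/o -hvo1.
- by left.
Qed.

Lemma G3 (R : realType) (a : nat -> R) (amin e : R) (M p : nat) :
  (forall j, amin <= a j /\ a j <= 1) -> 0 < amin -> 0 < e -> sp a M = e + p%:R ->
  forall i i', (i < i')%N -> (i' < M)%N -> own e (sp a i) = own e (sp a i') ->
  (i' - i)%:R * amin < 1 + e.
Proof.
move=> ha hamin he hM i i' hii' hi' ho.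
have [_ /andP[h1 h2]] := G1 ha hamin he hM (ltn_trans hii' hi').
have [_ /andP[h3 h4]] := G1 ha hamin he hM hi'.
have h5 := sp_addk (fun j => proj1 (ha j)) i (i' - i).
rewrite subnKC in h5; last exact: ltnW.
have h6 := bp_step (own e (sp a i)) (ltW he).
rewrite ho in h1 h6; lra.
Qed.

Lemma G4 (R : realType) (a : nat -> R) (amin e : R) (M p : nat) :
  (forall j, amin <= a j /\ a j <= 1) -> 0 < amin -> 0 < e -> sp a M = e + p%:R ->
  forall i i', (i < i')%N -> (i' < M)%N -> own e (sp a i) = own e (sp a i') ->
  str a e i -> False.
Proof.
move=> ha hamin he hM i i' hii' hi' ho.
have hpos : forall j, 0 < a j by move=> j; exact: (lt_le_trans hamin (proj1 (ha j))).
have [_ /andP[h3 h4]] := G1 ha hamin he hM hi'.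
have h5 := sp_mono (fun j => ltW (hpos j)) hii'.
rewrite /str ho => h6; lra.
Qed.

Lemma G5a (R : realType) (a : nat -> R) (amin e : R) (M p : nat) :
  (forall j, amin <= a j /\ a j <= 1) -> 0 < amin -> 0 < e -> sp a M = e + p%:R ->
  forall v, (v < p.+1)%N -> \sum_(i < M) ovl a e i v = bp e v.+1 - bp e v.
Proof.
move=> ha hamin he hM v hv.
have hpos : forall j, 0 < a j by move=> j; exact: (lt_le_trans hamin (proj1 (ha j))).
apply: tile.
- move=> k; rewrite spS lerDl; exact: ltW.
- exact: bp_le (ltW he).
- rewrite sp0; apply: (@bp_mono _ e 0) => //; exact: ltW.
- by rewrite hM; apply: (@bp_mono _ e _ p.+1) => //; exact: ltW.
Qed.

Lemma G5b (R : realType) (a : nat -> R) (amin e : R) (M p : nat) :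
  (forall j, amin <= a j /\ a j <= 1) -> 0 < amin -> 0 < e -> sp a M = e + p%:R ->
  forall i, (i < M)%N -> \sum_(v < p.+1) ovl a e i v = a i.
Proof.
move=> ha hamin he hM i hi.
have hpos : forall j, 0 < a j by move=> j; exact: (lt_le_trans hamin (proj1 (ha j))).
have hsi : sp a i <= sp a i.+1 by rewrite spS lerDl; exact: ltW.
rewrite /ovl.
under eq_bigr => v _ do rewrite (clamp_sym hsi (bp_le v (ltW he))).
rewrite (tile (t := bp e)).
- by rewrite spS addrAC subrr add0r.
- move=> k; exact: bp_le (ltW he).
- exact: hsi.
- rewrite /= -(sp0 a); apply: sp_mono => // j; exact: ltW.
- rewrite /= -hM; apply: sp_mono => // j; exact: ltW.
Qed.
Definition Rset (p o d r : nat) : {set 'I_p.+1} :=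
  inZp o |: [set (inZp o + inZp (d + nat_of_ord k))%R | k : 'I_r.-1].

Lemma zp_val (p k : nat) : (k < p.+1)%N -> val (inZp k : 'I_p.+1) = k.
Proof. by move=> h; rewrite /= modn_small. Qed.

Lemma inZp_add (p a b : nat) : (inZp a + inZp b = inZp (a + b) :> 'I_p.+1)%R.
Proof. by apply: val_inj; rewrite /= modnDm. Qed.

Lemma inZp_eq0 (p a : nat) : (0 < a)%N -> (a < p.+1)%N -> (inZp a : 'I_p.+1) != 0%R.
Proof. move=> h1 h2; apply/eqP => /(congr1 val); rewrite zp_val //= => h; lia. Qed.

Lemma Rset_mem (p o d r : nat) (x : 'I_p.+1) : x \in Rset p o d r ->
  x = inZp o \/ exists k : 'I_r.-1, x = (inZp o + inZp (d + nat_of_ord k))%R.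
Proof.
rewrite /Rset => /setU1P [->|/imsetP [k _ ->]]; [by left | by right; exists k].
Qed.

Lemma Rset_card (p o d r : nat) : (2 <= r)%N -> (1 <= d)%N -> (d + r <= p.+1)%N ->
  #|Rset p o d r| = r.
Proof.
move=> hr hd hdr; rewrite /Rset cardsU1 card_imset.
  rewrite card_ord; apply/eqP; rewrite eqn_leq; apply/andP; split.
    case: (inZp o \in _); lia.
  case: (boolP (inZp o \in _)) => /=; last by lia.
  move=> /imsetP [k _] /eqP.
  rewrite -subr_eq0 opprD addrA subrr add0r oppr_eq0.
  by rewrite (negPf (inZp_eq0 _ _)) //; have := ltn_ord k; lia.
move=> k1 k2 /addrI /(congr1 val); have := ltn_ord k1; have := ltn_ord k2.
move=> h1 h2; rewrite !zp_val; try lia.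
by move=> h; apply: ord_inj; lia.
Qed.

Lemma Rset_in0 (p o d r : nat) : inZp o \in Rset p o d r.
Proof. by rewrite /Rset setU11. Qed.

Lemma Rset_in1 (p o r : nat) : (2 <= r)%N -> (inZp o.+1 : 'I_p.+1) \in Rset p o 1 r.
Proof.
move=> hr; rewrite /Rset; apply/setU1P; right; apply/imsetP.
have k0 : (0 < r.-1)%N by lia.
exists (Ordinal k0) => //=; by rewrite inZp_add addn0 addn1.
Qed.

Lemma Rset_same (p o d d' r : nat) : (2 <= r)%N -> (1 <= d)%N -> (d < p.+1)%N ->
  (d' + r <= p.+1)%N -> Rset p o d r = Rset p o d' r -> (d' <= d)%N.
Proof.
move=> hr hd hdp hd'p heq.
have k0 : (0 < r.-1)%N by lia.
have : (inZp o + inZp (d + nat_of_ord (Ordinal k0)))%R \in Rset p o d r.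
  by apply/setU1P; right; apply/imsetP; exists (Ordinal k0).
rewrite heq => /Rset_mem [|[k]].
- rewrite -{2}[inZp o]addr0 => /addrI /eqP; rewrite /= addn0.
  by rewrite (negPf (inZp_eq0 _ _)).
- move=> /addrI /(congr1 val); have := ltn_ord k => hk.
  rewrite !(zp_val (p := p)) /=; lia.
Qed.

Lemma Rset_inj (p o o' d d' r : nat) : (2 <= r)%N -> (1 <= d)%N -> (1 <= d')%N ->
  (d + r + d' + r <= p.+1)%N -> (o < p.+1)%N -> (o' < p.+1)%N ->
  Rset p o d r = Rset p o' d' r -> o = o' /\ d = d'.
Proof.
move=> hr hd hd' hb ho ho' heq.
have hoo : (inZp o : 'I_p.+1) = inZp o' -> o = o'.
  by move=> /(congr1 val); rewrite !zp_val.
suff : (inZp o : 'I_p.+1) = inZp o'.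
  move=> h; have e := hoo h; subst o'; split => //.
  apply/eqP; rewrite eqn_leq; apply/andP; split.
    by apply: (Rset_same (p:=p) (o:=o) (d:=d') (d':=d) (r:=r)); (do ? first [lia | exact heq | exact (esym heq)]).
  by apply: (Rset_same (p:=p) (o:=o) (d:=d) (d':=d') (r:=r)); (do ? first [lia | exact heq | exact (esym heq)]).
have : (inZp o' : 'I_p.+1) \in Rset p o d r by rewrite heq Rset_in0.
case/Rset_mem => [-> //|[k hk]].
have : (inZp o : 'I_p.+1) \in Rset p o' d' r by rewrite -heq Rset_in0.
case/Rset_mem => [-> //|[k' hk']].
exfalso; move: hk'; rewrite hk -addrA -{1}[inZp o]addr0 => /addrI /esym /eqP.
rewrite !inZp_add; apply/negP; apply: inZp_eq0.
  lia.
have := ltn_ord k; have := ltn_ord k'; lia.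
Qed.
Lemma N_UI (L T : finType) (rels : L -> {set {set T}}) E (X Y : {set T}) :
  (N_E rels E X + N_E rels E Y <= N_E rels E (X :|: Y) + N_E rels E (X :&: Y))%N.
Proof.
rewrite /N_E.
set PX := [set S in rels E | S \subset X].
set PY := [set S in rels E | S \subset Y].
have -> : [set S in rels E | S \subset X :&: Y] = PX :&: PY.
  by apply/setP => S; rewrite !inE subsetI andbACA andbb.
rewrite -cardsUI leq_add2r; apply: subset_leq_card.
apply/subsetP => S; rewrite !inE => /orP [] /andP [-> h] /=.
  by apply: (subset_trans h); apply: subsetUl.
by apply: (subset_trans h); apply: subsetUr.
Qed.

Lemma delta_sub (R : realType) (L T : finType) (alpha : L -> R) (rels : L -> {set {set T}})
  (X Y : {set T}) : (forall E, 0 <= alpha E) ->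
  delta alpha rels (X :|: Y) + delta alpha rels (X :&: Y) <=
  delta alpha rels X + delta alpha rels Y.
Proof.
move=> ha; rewrite /delta.
have hc : (#|X :|: Y| + #|X :&: Y| = #|X| + #|Y|)%N := cardsUI X Y.
have : \sum_E alpha E * (N_E rels E X)%:R + \sum_E alpha E * (N_E rels E Y)%:R <=
       \sum_E alpha E * (N_E rels E (X :|: Y))%:R + \sum_E alpha E * (N_E rels E (X :&: Y))%:R.
  rewrite -!big_split /=; apply: ler_sum => E _.
  rewrite -!mulrDr; apply: ler_wpM2l => //; rewrite -!natrD ler_nat; exact: N_UI.
have : (#|X :|: Y|%:R + #|X :&: Y|%:R = #|X|%:R + #|Y|%:R :> R).
  by rewrite -!natrD hc.
lra.
Qed.

Lemma N_E_small (L T : finType) (ar : L -> nat) (rels : L -> {set {set T}}) E (Z : {set T}) :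
  wf_str ar rels -> (#|Z| < ar E)%N -> N_E rels E Z = 0%N.
Proof.
move=> hw hZ; apply/eqP; rewrite cards_eq0; apply/eqP/setP => S; rewrite !inE.
apply/negP => /andP [hS hsub]; have := hw E S hS; have := subset_leq_card hsub; lia.
Qed.

Lemma delta0 (R : realType) (L T : finType) (ar : L -> nat) (alpha : L -> R)
  (rels : L -> {set {set T}}) : (forall E, (2 <= ar E)%N) -> wf_str ar rels ->
  delta alpha rels set0 = 0.
Proof.
move=> har hw; rewrite /delta cards0 big1 ?subr0 // => E _.
by rewrite (N_E_small hw) ?mulr0 // cards0; have := har E; lia.
Qed.

Lemma zero_union (R : realType) (L T : finType) (ar : L -> nat) (alpha : L -> R)
  (rels : L -> {set {set T}}) (X Y : {set T}) : (forall E, 0 <= alpha E) ->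
  in_Kalpha ar alpha rels -> delta alpha rels X = 0 -> delta alpha rels Y = 0 ->
  delta alpha rels (X :|: Y) = 0.
Proof.
move=> ha [_ hK] hX hY; have := delta_sub rels X Y ha.
have := hK (X :|: Y); have := hK (X :&: Y); rewrite hX hY; lra.
Qed.

Definition goodb (R : realType) (L T : finType) (alpha : L -> R)
  (rels : L -> {set {set T}}) (v : T) : bool :=
  [exists Z : {set T}, (v \in Z) && (delta alpha rels Z == 0)].

Lemma all_good (R : realType) (L T : finType) (ar : L -> nat) (alpha : L -> R)
  (rels : L -> {set {set T}}) : (forall E, (2 <= ar E)%N) -> (forall E, 0 <= alpha E) ->
  in_Kalpha ar alpha rels -> (forall v, goodb alpha rels v) ->
  delta alpha rels setT = 0.
Proof.
move=> har ha hK hall.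
have h0 : delta alpha rels set0 == 0 by rewrite (delta0 _ har (proj1 hK)).
case: (@arg_maxnP _ set0 (fun Z : {set T} => delta alpha rels Z == 0) (fun Z => #|Z|) h0).
move=> Z /eqP hZ hmax.
suff -> : setT = Z by [].
apply/eqP; rewrite eq_sym eqEsubset subsetT /=; apply/subsetP => v _.
apply/negPn/negP => hv.
have /existsP [Z' /andP [hv' /eqP hZ']] := hall v.
have := hmax (Z :|: Z'); rewrite (zero_union ha hK hZ hZ') eqxx => /(_ isT).
have : Z \proper Z :|: Z'.
  rewrite properUl //; apply/negP => /subsetP /(_ v hv'); exact/negP.
move/proper_card; lia.
Qed.

Lemma embeds_id (L T : finType) (rels : L -> {set {set T}}) : embeds rels rels id.
Proof. by split => // E S; rewrite imset_id. Qed.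

Lemma embeds_comp (L T T1 T2 : finType) (r0 : L -> {set {set T}}) (r1 : L -> {set {set T1}})
  (r2 : L -> {set {set T2}}) f g :
  embeds r0 r1 f -> embeds r1 r2 g -> embeds r0 r2 (g \o f).
Proof.
move=> [hf h1] [hg h2]; split; first exact: inj_comp.
by move=> E S; rewrite h1 h2 imset_comp.
Qed.


Definition gd (R : realType) (a : nat -> R) (e : R) (D i : nat) : nat :=
  if str a e i then 1%N else (i %% D).+2.

Definition gg (T : finType) (p : nat) (x : T) (v : 'I_p.+1) : (T + 'I_p)%type :=
  if unlift ord0 v is Some w then inr w else inl x.

Lemma gg0 (T : finType) p (x : T) : @gg T p x ord0 = inl x.
Proof. by rewrite /gg unlift_none. Qed.

Lemma ggS (T : finType) p (x : T) (w : 'I_p) : gg x (lift ord0 w) = inr w.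
Proof. by rewrite /gg liftK. Qed.

Lemma gg_inj (T : finType) p (x : T) : injective (@gg T p x).
Proof.
move=> v1 v2; rewrite /gg.
case: (unliftP ord0 v1) => [w1 ->|->]; case: (unliftP ord0 v2) => [w2 ->|->] //.
by case=> ->.
Qed.

Definition gG (R : realType) (L T : finType) (p : nat) (x : T) (ar : L -> nat)
  (ty : nat -> L) (a : nat -> R) (e : R) (D i : nat) : {set T + 'I_p} :=
  gg x @: Rset p (own e (sp a i)) (gd a e D i) (ar (ty i)).

Definition grels (R : realType) (L T : finType) (rels : L -> {set {set T}})
  (p M : nat) (x : T) (ar : L -> nat)
  (ty : nat -> L) (a : nat -> R) (e : R) (D : nat) (E : L) : {set {set T + 'I_p}} :=
  [set ((@inl T 'I_p) @: S) | S : {set T} in rels E] :|: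
  [set gG p x ar ty a e D (nat_of_ord i) | i in [set i : 'I_M | ty i == E]].

Lemma gd_bounds (R : realType) (a : nat -> R) e D i : (0 < D)%N ->
  (1 <= gd a e D i <= D.+1)%N.
Proof. by move=> hD; rewrite /gd; case: str => //; have := ltn_pmod i hD; lia. Qed.

Lemma gG_card (R : realType) (L T : finType) (p : nat) (x : T) (ar : L -> nat)
  (ty : nat -> L) (a : nat -> R) (e : R) (D i : nat) :
  (0 < D)%N -> (2 <= ar (ty i))%N -> (D.+1 + ar (ty i) <= p.+1)%N ->
  #|gG p x ar ty a e D i| = ar (ty i).
Proof.
move=> hD h2 hb; rewrite /gG card_imset; last exact: gg_inj.
have hd := @gd_bounds R a e D i hD.
apply: Rset_card => //; lia.
Qed.

Lemma gG_inr (R : realType) (L T : finType) (p : nat) (x : T) (ar : L -> nat)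
  (ty : nat -> L) (a : nat -> R) (e : R) (D i : nat) :
  (0 < D)%N -> (2 <= ar (ty i))%N -> (D.+1 + ar (ty i) <= p.+1)%N ->
  exists w, inr w \in gG p x ar ty a e D i.
Proof.
move=> hD h2 hb.
have hc := @gG_card R L T p x ar ty a e D i hD h2 hb.
case: (boolP [exists w, inr w \in gG p x ar ty a e D i]) => [/existsP //|].
rewrite negb_exists => /forallP hw; exfalso.
have : gG p x ar ty a e D i \subset [set inl x].
  apply/subsetP => y; rewrite inE; case: y => [t|w].
    rewrite /gG => /imsetP [v _]; rewrite /gg; case: unlift => [w|] // [->] //.
  by have := hw w => /negPf ->.
move/subset_leq_card; rewrite cards1 hc; lia.
Qed.

Lemma regroup (R : realType) (L : finType) (alpha : L -> R) (M : nat) (ty : nat -> L)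
  (P : pred 'I_M) :
  \sum_E alpha E * (#|[set i : 'I_M | (ty i == E) && P i]|)%:R =
  \sum_(i : 'I_M | P i) alpha (ty i).
Proof.
rewrite (partition_big (fun i : 'I_M => ty i) xpredT) //=.
apply: eq_bigr => E _.
rewrite (eq_bigr (fun _ => alpha E)); last by move=> i /andP [_ /eqP ->].
rewrite sumr_const mulr_natr; congr (_ *+ _).
by apply: eq_card => i; rewrite !inE andbC.
Qed.

Lemma ovl_ge0 (R : realType) (a : nat -> R) (e : R) i v :
  (forall j, 0 <= a j) -> 0 <= e -> 0 <= ovl a e i v.
Proof.
move=> ha he; rewrite /ovl subr_ge0; apply: clamp_mono; first exact: bp_le.
by rewrite spS lerDl.
Qed.

Lemma ovl_support (R : realType) (L T : finType) (p M : nat) (x : T) (ar : L -> nat)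
  (ty : nat -> L) (a : nat -> R) (amin e : R) (D : nat) :
  (forall j, amin <= a j /\ a j <= 1) -> 0 < amin -> 0 < e -> sp a M = e + p%:R ->
  (forall i, 2 <= ar (ty i))%N ->
  forall (i : nat) (v : 'I_p.+1), (i < M)%N -> ovl a e i v != 0 ->
  gg x v \in gG p x ar ty a e D i.
Proof.
move=> ha hamin he hM har i v hi hnz.
rewrite /gG; apply: imset_f.
have [h|[h hs]] := G2 ha hamin he hM hi hnz.
  by rewrite -[v]valZpK h Rset_in0.
rewrite /gd hs -[v]valZpK h; exact: Rset_in1.
Qed.

Lemma key_ineq (R : realType) (L T : finType) (p M : nat) (x : T) (ar : L -> nat)
  (ty : nat -> L) (a : nat -> R) (amin e : R) (D : nat) :
  (forall j, amin <= a j /\ a j <= 1) -> 0 < amin -> 0 < e -> sp a M = e + p%:R ->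
  (forall i, 2 <= ar (ty i))%N ->
  forall Z' : {set T + 'I_p},
  \sum_(i : 'I_M | gG p x ar ty a e D i \subset Z') a i <=
  (if inl x \in Z' then e else 0) + (#|[set w | inr w \in Z']|)%:R.
Proof.
move=> ha hamin he hM har Z'.
have ha0 : forall j, 0 <= a j by move=> j; exact: le_trans (ltW hamin) (proj1 (ha j)).
have step1 : forall i : 'I_M, gG p x ar ty a e D i \subset Z' ->
    a i = \sum_(v < p.+1 | gg x v \in Z') ovl a e i v.
  move=> i hsub; rewrite -(G5b ha hamin he hM (ltn_ord i)) [RHS]big_mkcond /=.
  apply: eq_bigr => v _; case: ifP => // hv.
  case: (eqVneq (ovl a e i v) 0) => // hnz.
  have := @ovl_support R L T p M x ar ty a amin e D ha hamin he hM har i v (ltn_ord i) hnz.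
  by move/(subsetP hsub); rewrite hv.
rewrite (eq_bigr _ step1).
apply: (@le_trans _ _ (\sum_(i < M) \sum_(v < p.+1 | gg x v \in Z') ovl a e i v)).
  rewrite [X in X <= _]big_mkcond /=; apply: ler_sum => i _.
  case: ifP => // _; apply: sumr_ge0 => v _; exact: ovl_ge0 (ltW he).
rewrite exchange_big /=.
rewrite (eq_bigr (fun v : 'I_p.+1 => bp e v.+1 - bp e v)); last first.
  move=> v _; exact: (@G5a R a amin e M p ha hamin he hM v (ltn_ord v)).
rewrite big_mkcond big_ord_recl /= gg0.
rewrite (eq_bigr (fun w : 'I_p => if inr w \in Z' then 1 else 0)); last first.
  move=> w _; rewrite ggS; case: ifP => // _; rewrite /bump leq0n add0n add1n -natr1; lra.
rewrite -big_mkcond /= sumr_const.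
apply: lerD.
  by case: ifP => // _; rewrite subr0 addr0.
by rewrite cardsE.
Qed.

Lemma gG_inj_lt (R : realType) (L T : finType) (p M : nat) (x : T) (ar : L -> nat)
  (ty : nat -> L) (a : nat -> R) (amin e : R) (D : nat) :
  (forall j, amin <= a j /\ a j <= 1) -> 0 < amin -> 0 < e -> sp a M = e + p%:R ->
  (forall i, 2 <= ar (ty i))%N -> (0 < D)%N -> 1 + e < D%:R * amin ->
  (forall i, 2 * (D.+1 + ar (ty i)) <= p.+1)%N ->
  forall i i', (i < i')%N -> (i' < M)%N -> ty i = ty i' ->
  gG p x ar ty a e D i = gG p x ar ty a e D i' -> False.
Proof.
move=> ha hamin he hM har hD hDa hbig i i' hii' hi' hty heq.
have hi : (i < M)%N by apply: ltn_trans hi'.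
move: heq; rewrite /gG => /(imset_inj (@gg_inj T p x)); rewrite -hty.
have [ho1 _] := G1 ha hamin he hM hi.
have [ho2 _] := G1 ha hamin he hM hi'.
have hd1 := @gd_bounds R a e D i hD.
have hd2 := @gd_bounds R a e D i' hD.
have hb := hbig i.
move/Rset_inj => [] //; try lia.
move=> hown hgd.
have h3 := G3 ha hamin he hM hii' hi' hown.
have hlt : (i' - i < D)%N.
  rewrite -(ltr_nat R); apply: (@lt_le_trans _ _ ((1 + e) / amin)).
    by rewrite ltr_pdivlMr.
  by rewrite ler_pdivrMr //; exact: ltW.
move: hgd; rewrite /gd.
case hs : (str a e i).
  by exfalso; exact: (G4 ha hamin he hM hii' hi' hown hs).
case: (str a e i') => // /eqP; rewrite !eqSS => /eqP hmod.
have : (i' == i %[mod D]) by rewrite hmod.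
rewrite eqn_mod_dvd; last exact: ltnW.
move/dvdn_leq; lia.
Qed.

Lemma card_sum_split (T : finType) p (Z' : {set T + 'I_p}) :
  #|Z'| = (#|(@inl T 'I_p) @^-1: Z'| + #|[set w : 'I_p | inr w \in Z']|)%N.
Proof.
rewrite -!sum1_card big_sumType /=; congr (_ + _)%N; apply: eq_bigl => y; by rewrite !inE.
Qed.

Lemma gadget (R : realType) (L : finType) (ar : L -> nat) (alpha : L -> R)
  (har : forall E, (2 <= ar E)%N) (halpha : forall E, 0 < alpha E /\ alpha E <= 1)
  (T : finType) (rels : L -> {set {set T}}) (hK : in_Kalpha ar alpha rels)
  (x : T) (B : {set T}) (hxB : x \in B) (e : R) (he : 0 < e)
  (heB : delta alpha rels B = e)
  (hmin : forall Z : {set T}, x \in Z -> e <= delta alpha rels Z)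
  (p M : nat) (ty : nat -> L) (c : L -> nat)
  (hcnt : forall E, #|[set i : 'I_M | ty i == E]| = c E)
  (hsum : \sum_E alpha E * (c E)%:R = e + p%:R)
  (amin : R) (hamin : 0 < amin) (hamE : forall E, amin <= alpha E)
  (D : nat) (hD : (0 < D)%N) (hDa : 1 + e < D%:R * amin)
  (hbig : forall E, (2 * (D.+1 + ar E) <= p.+1)%N) :
  exists (T1 : finType) (rels1 : L -> {set {set T1}}) (f : T -> T1),
   in_Kalpha ar alpha rels1 /\ embeds rels rels1 f /\
   (forall y, ~~ goodb alpha rels1 y ->
      exists2 v, y = f v & (v != x) && ~~ goodb alpha rels v).
Proof.
pose a := fun j => alpha (ty j).
have ha : forall j, amin <= a j /\ a j <= 1 by move=> j; split; [exact: hamE | exact: (proj2 (halpha _))].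
have ha0 : forall E, 0 <= alpha E by move=> E; exact: ltW (proj1 (halpha E)).
have hM : sp a M = e + p%:R.
  rewrite -hsum /sp -(@regroup R L alpha M ty xpredT); apply: eq_bigr => E _.
  by rewrite -hcnt; congr (_ * (_)%:R); apply: eq_card => i; rewrite !inE andbT.
have har' : forall i, (2 <= ar (ty i))%N by move=> i; exact: har.
have hbig' : forall i, (2 * (D.+1 + ar (ty i)) <= p.+1)%N by move=> i; exact: hbig.
have hb1 : forall i, (D.+1 + ar (ty i) <= p.+1)%N by move=> i; have := hbig' i; lia.
pose G := gG p x ar ty a e D.
pose rels1 := @grels R L T rels p M x ar ty a e D.
have hGin : forall i, exists w, inr w \in G i.
  by move=> i; exact: (@gG_inr R L T p x ar ty a e D i hD (har' i) (hb1 i)).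
have hGinl : forall i (S : {set T}), inl @: S != G i.
  move=> i S; apply/eqP => heq; have [w hw] := hGin i.
  by move: hw; rewrite -heq => /imsetP [t _].
have hGinj : forall i i' : 'I_M, ty i = ty i' -> G i = G i' -> i = i'.
  move=> i i' hty heq; apply: val_inj => /=.
  case: (ltngtP i i') => // hlt; exfalso.
    exact: (gG_inj_lt ha hamin he hM har' hD hDa hbig' hlt (ltn_ord i') hty heq).
  exact: (gG_inj_lt ha hamin he hM har' hD hDa hbig' hlt (ltn_ord i) (esym hty) (esym heq)).
have F1 : forall E (Z' : {set T + 'I_p}),
    (N_E rels1 E Z' <= N_E rels E (inl @^-1: Z') +
       #|[set i : 'I_M | (ty i == E) && (G i \subset Z')]|)%N.
  move=> E Z'; rewrite /N_E.
  set Zo := inl @^-1: Z'.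
  set OLD := (fun S : {set T} => (@inl T 'I_p) @: S) @: [set S in rels E | S \subset Zo].
  set NEW := (fun i : 'I_M => G i) @: [set i : 'I_M | (ty i == E) && (G i \subset Z')].
  have hs : [set S in rels1 E | S \subset Z'] \subset OLD :|: NEW.
    apply/subsetP => S; rewrite inE => /andP [hS hsub].
    move: hS; rewrite /rels1 /grels; case/setUP => /imsetP [S0 hS0 hSe].
      apply/setUP; left; rewrite hSe; apply: imset_f; rewrite inE hS0 /=.
      apply/subsetP => t ht; rewrite inE; apply: (subsetP hsub); rewrite hSe; exact: imset_f.
    apply/setUP; right; rewrite hSe; apply: imset_f; rewrite inE.
    by move: hS0; rewrite inE => -> /=; rewrite /G -hSe.
  apply: (leq_trans (subset_leq_card hs)).
  apply: (leq_trans (leq_card_setU _ _)); apply: leq_add; exact: leq_imset_card.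
have hinl : injective (@inl T 'I_p) by move=> ? ? [].
have F3 : forall E (Z : {set T}), N_E rels1 E (inl @: Z) = N_E rels E Z.
  move=> E Z; apply/eqP; rewrite eqn_leq; apply/andP; split.
    apply: (leq_trans (F1 E _)).
    have -> : (@inl T 'I_p) @^-1: ((@inl T 'I_p) @: Z) = Z.
      by apply/setP => t; rewrite inE mem_imset.
    rewrite -[X in (_ <= X)%N]addn0 leq_add2l leqn0 cards_eq0; apply/eqP/setP => i.
    rewrite !inE; apply/negP => /andP [_ hsub].
    have [w hw] := hGin i; have := subsetP hsub _ hw; by case/imsetP.
  rewrite /N_E -(card_imset _ (imset_inj hinl)); apply: subset_leq_card.
  apply/subsetP => S /imsetP [S0]; rewrite inE => /andP [hS0 hsub] ->.
  rewrite inE; apply/andP; split; last exact: imsetS.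
  by rewrite /rels1 /grels; apply/setUP; left; apply: imset_f.
have D3 : forall Z : {set T}, delta alpha rels1 (inl @: Z) = delta alpha rels Z.
  move=> Z; rewrite /delta card_imset //; congr (_ - _); apply: eq_bigr => E _.
  by rewrite F3.
have K1 : in_Kalpha ar alpha rels1.
  split.
    move=> E S; rewrite /rels1 /grels; case/setUP => /imsetP [S0 hS0 ->].
      by rewrite card_imset //; exact: (proj1 hK) _ _ hS0.
    move: hS0; rewrite inE => /eqP hty; rewrite -hty.
    exact: (@gG_card R L T p x ar ty a e D S0 hD (har' S0) (hb1 S0)).
  move=> Z'.
  have hc := card_sum_split Z'.
  set Zo := inl @^-1: Z' in hc *.
  set Zp := [set w | inr w \in Z'] in hc *.
  have h1 : \sum_E alpha E * (N_E rels1 E Z')%:R <=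
      \sum_E alpha E * (N_E rels E Zo)%:R + \sum_(i : 'I_M | G i \subset Z') a i.
    rewrite -(regroup alpha ty (fun i : 'I_M => G i \subset Z')) -big_split /=.
    apply: ler_sum => E _; rewrite -mulrDr ler_wpM2l // -natrD ler_nat; exact: F1.
  have h2 : \sum_(i : 'I_M | G i \subset Z') a i <=
      (if inl x \in Z' then e else 0) + (#|Zp|)%:R :=
    @key_ineq R L T p M x ar ty a amin e D ha hamin he hM har' Z'.
  have h3 := (proj2 hK) Zo.
  have h4 : (if inl x \in Z' then e else 0) <= delta alpha rels Zo.
    by case: ifP => hx; [apply: hmin; rewrite inE | exact: h3].
  have h5 : delta alpha rels Zo = #|Zo|%:R - \sum_E alpha E * (N_E rels E Zo)%:R by [].
  rewrite /delta hc natrD.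
  move: h1 h2; set S1 := \sum_(i : 'I_M | G i \subset Z') a i; lra.
pose Z1 := [set y : T + 'I_p | if y is inl t then t \in B else true].
have F4 : delta alpha rels1 Z1 = 0.
  apply/eqP; rewrite eq_le (proj2 K1 Z1) andbT.
  have hc := card_sum_split Z1.
  have hB1 : (@inl T 'I_p) @^-1: Z1 = B by apply/setP => t; rewrite !inE.
  have hZp : #|[set w : 'I_p | inr w \in Z1]| = p.
    by rewrite -[RHS]card_ord; apply: eq_card => w; rewrite !inE.
  rewrite hB1 hZp in hc.
  have hN : forall E, (N_E rels E B + c E <= N_E rels1 E Z1)%N.
    move=> E.
    set OLD := (fun S : {set T} => (@inl T 'I_p) @: S) @: [set S in rels E | S \subset B].
    set NEW := (fun i : 'I_M => G i) @: [set i : 'I_M | ty i == E].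
    have hO : #|OLD| = N_E rels E B by rewrite card_imset //; exact: imset_inj.
    have hNw : #|NEW| = c E.
      rewrite card_in_imset ?hcnt // => i i'; rewrite !inE => /eqP h1 /eqP h2.
      by apply: hGinj; rewrite h1 h2.
    have hI : OLD :&: NEW = set0.
      apply/setP => S; rewrite !inE; apply/negP => /andP [/imsetP [S0 _ ->] /imsetP [i _]].
      by apply/eqP; exact: hGinl.
    have hsub : OLD :|: NEW \subset [set S in rels1 E | S \subset Z1].
      apply/subsetP => S; rewrite inE => /orP [] /imsetP.
        move=> [S0]; rewrite inE => /andP [hS0 hsub] ->; rewrite inE; apply/andP; split.
          by rewrite /rels1 /grels; apply/setUP; left; apply: imset_f.
        by apply/subsetP => y /imsetP [t ht ->]; rewrite inE (subsetP hsub).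
      move=> [i hi ->]; rewrite inE; apply/andP; split.
        by rewrite /rels1 /grels; apply/setUP; right; apply: imset_f.
      apply/subsetP => y /imsetP [v _ ->]; rewrite inE /gg.
      by case: unlift.
    rewrite -hO -hNw; have := cardsUI OLD NEW; rewrite hI cards0 addn0 => <-.
    exact: subset_leq_card.
  have hs : \sum_E alpha E * (N_E rels E B)%:R + \sum_E alpha E * (c E)%:R <=
      \sum_E alpha E * (N_E rels1 E Z1)%:R.
    rewrite -big_split /=; apply: ler_sum => E _.
    by rewrite -mulrDr ler_wpM2l // -natrD ler_nat.
  have hB : delta alpha rels B = #|B|%:R - \sum_E alpha E * (N_E rels E B)%:R by [].
  rewrite /delta hc natrD; move: hs; rewrite hsum; lra.
exists (T + 'I_p)%type, rels1, inl; split => //; split.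
  split => // E S; apply/idP/idP.
    by move=> hS; rewrite /rels1 /grels; apply/setUP; left; apply: imset_f.
  rewrite /rels1 /grels => /setUP [] /imsetP [S0 hS0 heq].
    by rewrite (imset_inj hinl heq).
  by exfalso; move/eqP: (hGinl S0 S).
move=> y; case: y => [t|w] hy.
  exists t => //; apply/andP; split.
    apply/eqP => htx; subst t; move/negP: hy; apply; apply/existsP; exists Z1.
    by rewrite inE hxB F4 eqxx.
  apply/negP => /existsP [Z /andP [hz /eqP hd]]; move/negP: hy; apply.
  by apply/existsP; exists (inl @: Z); rewrite mem_imset // D3 hd eqxx hz.
exfalso; move/negP: hy; apply; apply/existsP; exists Z1.
by rewrite inE F4 eqxx.
Qed.

Lemma list_count (L : finType) (E0 : L) (c : L -> nat) (E : L) :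
  #|[set i : 'I_(size (flatten [seq nseq (c E') E' | E' <- enum L])) |
     nth E0 (flatten [seq nseq (c E') E' | E' <- enum L]) i == E]| = c E.
Proof.
set Es := flatten _.
rewrite -sum1_card.
have -> : (\sum_(i in [set i : 'I_(size Es) | nth E0 Es i == E]) 1 =
          \sum_(i < size Es | nth E0 Es i == E) 1)%N.
  by apply: eq_bigl => i; rewrite inE.
rewrite -(big_mkord (fun i => nth E0 Es i == E) (fun _ => 1%N)).
rewrite -(big_nth E0 (fun y => y == E) (fun _ => 1%N)) sum1_count.
rewrite count_flatten -map_comp.
rewrite (eq_map (g := fun E' => ((E' == E) * c E')%N)); last first.
  by move=> E' /=; rewrite count_nseq.
rewrite sumnE big_map big_enum /= (bigD1 E) //= eqxx mul1n big1 ?addn0 //.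
by move=> E' /negPf ->.
Qed.

Lemma step (R : realType) (L : finType) (ar : L -> nat) (alpha : L -> R)
  (har : forall E, (2 <= ar E)%N) (halpha : forall E, 0 < alpha E /\ alpha E <= 1)
  (hcoh : coherent alpha) (E0 : L)
  (T : finType) (rels : L -> {set {set T}}) (hK : in_Kalpha ar alpha rels)
  (x : T) (hx : ~~ goodb alpha rels x) :
  exists (T1 : finType) (rels1 : L -> {set {set T1}}) (f : T -> T1),
   in_Kalpha ar alpha rels1 /\ embeds rels rels1 f /\
   (forall y, ~~ goodb alpha rels1 y -> exists2 v, y = f v & (v != x) && ~~ goodb alpha rels v).
Proof.
have ha0 : forall E, 0 <= alpha E by move=> E; exact: ltW (proj1 (halpha E)).
have hx1 : x \in [set x] by rewrite set11.
case: (@arg_minP _ _ _ _ (fun Z : {set T} => x \in Z) (fun Z => delta alpha rels Z) hx1).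
move=> B hxB hmin.
set e := delta alpha rels B.
have he : 0 < e.
  rewrite lt_def (proj2 hK B) andbT; apply/negP => /eqP he0.
  by move/negP: hx; apply; apply/existsP; exists B; rewrite hxB -/e he0 eqxx.
have [m [hm [q hq]]] := hcoh.
have hS0 : 0 < \sum_E (m E)%:R * alpha E.
  rewrite (bigD1 E0) //=; apply: ltr_pwDl.
    by apply: mulr_gt0; [rewrite ltr0n; exact: hm | exact: proj1 (halpha E0)].
  by apply: sumr_ge0 => E _; apply: mulr_ge0 => //; rewrite ler0n.
have hq0 : 0 < q by rewrite -(ltr0q R) -hq.
pose nq := `|numq q|%N.
pose dq := `|denq q|%N.
have hnq : (0 < nq)%N by rewrite /nq absz_gt0 gt_eqF // numq_gt0.
have hdq : (0 < dq)%N by rewrite /dq absz_gt0 gt_eqF // denq_gt0.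
have hKq : forall t : nat, (dq * t)%:R * ratr q = (nq * t)%:R :> R.
  move=> t; rewrite /ratr !natrM.
  have -> : (numq q)%:~R = nq%:R :> R.
    by rewrite /nq -[in LHS](@gez0_abs (numq q)) ?ltW ?numq_gt0.
  have -> : (denq q)%:~R = dq%:R :> R.
    by rewrite /dq -[in LHS](@gez0_abs (denq q)) ?ltW ?denq_gt0.
  have hd : dq%:R != 0 :> R by rewrite pnatr_eq0 -lt0n.
  by field.
pose S := \sum_E (alpha E)^-1.
have hS : 0 < S.
  rewrite /S (bigD1 E0) //=; apply: ltr_pwDl; first by rewrite invr_gt0; exact: proj1 (halpha E0).
  by apply: sumr_ge0 => E _; rewrite invr_ge0.
pose amin := S^-1.
have hamin : 0 < amin by rewrite invr_gt0.
have hamE : forall E, amin <= alpha E.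
  move=> E; have hE := proj1 (halpha E).
  rewrite /amin -[alpha E]invrK lef_pV2 ?posrE ?invr_gt0 //.
  rewrite /S (bigD1 E) //= lerDl; apply: sumr_ge0 => E' _; rewrite invr_ge0.
  exact: ltW (proj1 (halpha E')).
pose D := (Num.trunc ((1 + e) / amin)).+1.
have hD : (0 < D)%N by [].
have hDa : 1 + e < D%:R * amin.
  by rewrite -ltr_pdivrMr // /D; exact: truncnS_gt.
pose rmax := (\max_E ar E)%N.
pose t := (#|B| + 2 * (D.+1 + rmax) + \sum_E N_E rels E B)%N.
pose K := (dq * t)%N.
pose p := (nq * t - #|B|)%N.
pose c := fun E => (K * m E - N_E rels E B)%N.
pose Es := flatten [seq nseq (c E) E | E <- enum L].
pose M := size Es.
pose ty := fun j => nth E0 Es j.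
have htnq : (t <= nq * t)%N by apply: leq_pmull.
have htK : forall E, (t <= K * m E)%N.
  move=> E; rewrite /K; have := leq_mul (leq_mul hdq (leqnn t)) (hm E).
  by rewrite mul1n muln1.
have hNt : forall E, (N_E rels E B <= t)%N.
  move=> E; rewrite /t (bigD1 E) //=; lia.
have hcnt : forall E, #|[set i : 'I_M | ty i == E]| = c E.
  by move=> E; exact: list_count.
have hsum : \sum_E alpha E * (c E)%:R = e + p%:R.
  have -> : \sum_E alpha E * (c E)%:R =
      K%:R * (\sum_E (m E)%:R * alpha E) - \sum_E alpha E * (N_E rels E B)%:R.
    rewrite mulr_sumr -sumrB; apply: eq_bigr => E _.
    rewrite /c natrB; last exact: leq_trans (hNt E) (htK E).
    by rewrite natrM; ring.
  rewrite hq hKq /p natrB; last by lia.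
  rewrite /e /delta; ring.
have hbig : forall E, (2 * (D.+1 + ar E) <= p.+1)%N.
  move=> E; have := leq_bigmax E (F := ar); rewrite -/rmax /p /t; lia.
exact: (@gadget R L ar alpha har halpha T rels hK x B hxB e he erefl hmin
  p M ty c hcnt hsum amin hamin hamE D hD hDa hbig).
Qed.
Lemma main_ind (R : realType) (L : finType) (ar : L -> nat) (alpha : L -> R)
  (har : forall E, (2 <= ar E)%N) (halpha : forall E, 0 < alpha E /\ alpha E <= 1)
  (hcoh : coherent alpha) (E0 : L) (k : nat) :
  forall (T : finType) (rels : L -> {set {set T}}), in_Kalpha ar alpha rels ->
  (#|[set v | ~~ goodb alpha rels v]| <= k)%N ->
  exists (T' : finType) (relsD : L -> {set {set T'}}) (f : T -> T'),
    in_Kalpha ar alpha relsD /\ embeds rels relsD f /\ delta alpha relsD setT = 0.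
Proof.
have ha0 : forall E, 0 <= alpha E by move=> E; exact: ltW (proj1 (halpha E)).
elim: k => [|k IH] T rels hK hk.
  exists T, rels, id; split => //; split; first exact: embeds_id.
  apply: (all_good har ha0 hK) => v; case: (boolP (goodb alpha rels v)) => // hv.
  suff : (0 < #|[set v | ~~ goodb alpha rels v]|)%N by lia.
  by apply/card_gt0P; exists v; rewrite inE.
case: (boolP [forall v, goodb alpha rels v]) => [/forallP hall|].
  exists T, rels, id; split => //; split; first exact: embeds_id.
  exact: (all_good har ha0 hK).
rewrite negb_forall => /existsP [x hx].
have [T1 [rels1 [f [hK1 [hemb hbad]]]]] := step har halpha hcoh E0 hK hx.
suff hk1 : (#|[set v | ~~ goodb alpha rels1 v]| <= k)%N.
  have [T' [relsD [g [hKD [hembD hD]]]]] := IH T1 rels1 hK1 hk1.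
  by exists T', relsD, (g \o f); split => //; split => //; exact: embeds_comp hemb hembD.
have hsub : [set y | ~~ goodb alpha rels1 y] \subset
            f @: ([set v | ~~ goodb alpha rels v] :\ x).
  apply/subsetP => y; rewrite inE => /hbad [v -> /andP [h1 h2]].
  by apply: imset_f; rewrite !inE h1 h2.
have := subset_leq_card hsub; have := leq_imset_card f ([set v | ~~ goodb alpha rels v] :\ x).
have hxin : x \in [set v | ~~ goodb alpha rels v] by rewrite inE.
have := cardsD1 x [set v | ~~ goodb alpha rels v]; rewrite hxin; lia.
Qed.

Unset Implicit Arguments.
Theorem theorem3p39 (R : realType) (L : finType) (ar : L -> nat)
    (alpha : L -> R)
    (har : forall E : L, (2 <= ar E)%N)
    (halpha : forall E : L, 0 < alpha E /\ alpha E <= 1)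
    (hnot : ~ ((forall E : L, ar E = 2%N) /\ (forall E : L, alpha E = 1)))
    (hcoh : coherent alpha)
    (T : finType) (relsA : L -> {set {set T}})
    (hA : in_Kalpha ar alpha relsA)
    (hpos : 0 < delta alpha relsA setT) :
  exists (T' : finType) (relsD : L -> {set {set T'}}) (f : T -> T'),
    in_Kalpha ar alpha relsD /\ embeds relsA relsD f /\
    delta alpha relsD setT = 0.
Proof.
case: (pickP (@predT L)) => [E0 _ | hnone]; last first.
  by exfalso; apply: hnot; split => E; have := hnone E.
exact: (main_ind har halpha hcoh E0 hA (leqnn _)).
Qed.
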